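(* Let $(G,M,\Delta)$ be a Garside structure, $(H,N,\delta)$ a parabolic substructure, and $T$ the set of $(H,N)$-reduced elements of $G$. Put $\omega=\delta^{-1}\Delta$ and $\Phi(\alpha)=\Delta\alpha\Delta^{-1}$. Let $\theta\in T\setminus M$ with right $\Delta$-form $\theta=c\Delta^{-p}$, $p\ge1$, and let $\beta\in H\setminus N$ with right $\delta$-form $\beta=b\delta^{-k}$, $k\ge1$ (that is, $b\in N$ and $\delta\not\le_L b$). Then the right $\Delta$-form of $\beta\theta$ is $\beta\theta=\big(b\,\omega_1\cdots\omega_k\,\Phi^{-k}(c)\big)\Delta^{-k-p}$, where $\omega_i=\Phi^{-i+1}(\omega)$ for $i\in\{1,\dots,k\}$.
   Context: Let $G$ be a group and $M$ a submonoid with $M\cap M^{-1}=\{1\}$. Define $\alpha\le_L\beta$ iff $\alpha^{-1}\beta\in M$, and $\alpha\le_R\beta$ iff $\beta\alpha^{-1}\in M$. For $a\in M$ let $\mathrm{Div}_L(a)=\{b\in M: b\le_L a\}$, $\mathrm{Div}_R(a)=\{b\in M: b\le_R a\}$; $a$ is balanced if these coincide, and then $\mathrm{Div}(a)$ denotes this set. $M$ is Noetherian if each $a\in M$ admits an $n$ such that $a$ is not a product of more than $n$ non-trivial factors. A Garside structure $(G,M,\Delta)$: $\Delta\in M$ balanced, $M$ Noetherian, $\mathrm{Div}(\Delta)$ finite and generating $M$ as a monoid and $G$ as a group, $(G,\le_L)$ a lattice with meet $\wedge_L$. A parabolic substructure $(H,N,\delta)$: $\delta\in M$ balanced, $H$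 (resp. $N$) the subgroup (resp. submonoid) generated by $\mathrm{Div}(\delta)$, and $\mathrm{Div}(\delta)=\mathrm{Div}(\Delta)\cap N$; it is assumed $H\ne\{1\}$. $a\in M$ is unmovable if $\Delta\not\le_L a$; every $\alpha\in G$ has a unique right $\Delta$-form $\alpha=a\Delta^p$ ($a\in M$ unmovable, $p\in\mathbb Z$); analogously each $\beta\in H$ has a unique right $\delta$-form $\beta=b\delta^{q}$ with $b\in N$, $\delta\not\le_L b$, $q\in\mathbb Z$. $a\in M$ is $N$-reduced if $a\wedge_L\delta=1$. $\alpha$ with right $\Delta$-form $a\Delta^p$ is $(H,N)$-reduced if $a$ is $N$-reduced and either $p=0$, or $p<0$ and $\omega\not\le_L a$. *)

(* Defs.v *)
From mathcomp Require Import all_boot.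
From Stdlib Require Import ZArith.

Set Implicit Arguments.
Unset Strict Implicit.
Unset Printing Implicit Defensive.

Local Open Scope group_scope.

Section Garside.
Variable G : groupType.

Definition zpowg (x : G) (p : Z) : G :=
  match p with
  | Z0 => 1
  | Zpos n => x ^+ Pos.to_nat n
  | Zneg n => x ^- Pos.to_nat n
  end.

Definition prodl (s : seq G) : G := foldr (fun x acc => x * acc) 1 s.

Variable M : G -> Prop.

Definition pos_submonoid : Prop :=
  [/\ M 1, (forall x y, M x -> M y -> M (x * y)) &
      (forall x, M x -> M x^-1 -> x = 1)].

Definition leL (x y : G) : Prop := M (x^-1 * y).
Definition leR (x y : G) : Prop := M (y * x^-1).

Definition DivL (a : G) (b : G) : Prop := M b /\ leL b a.
Definition DivR (a : G) (b : G) : Prop := M b /\ leR b a.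

Definition balanced (a : G) : Prop := M a /\ (forall b, DivL a b <-> DivR a b).

(* Div(a) for a balanced (we use Div_L) *)
Definition Div (a : G) (b : G) : Prop := DivL a b.

Definition noetherian : Prop :=
  forall a, M a -> exists n : nat, forall s : seq G,
    (forall x, x \in s -> M x /\ x <> 1) -> prodl s = a -> size s <= n.

Definition gen_monoid (D : G -> Prop) (x : G) : Prop :=
  exists s : seq G, (forall y, y \in s -> D y) /\ x = prodl s.

Definition gen_group (D : G -> Prop) (x : G) : Prop :=
  exists s : seq (bool * G), (forall e, e \in s -> D e.2) /\
    x = prodl [seq (if e.1 then e.2 else e.2^-1) | e <- s].

Definition finite_set (D : G -> Prop) : Prop :=
  exists s : seq G, forall x, D x <-> x \in s.

Definition is_meetL (x y m : G) : Prop :=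
  [/\ leL m x, leL m y & forall z, leL z x -> leL z y -> leL z m].
Definition is_joinL (x y j : G) : Prop :=
  [/\ leL x j, leL y j & forall z, leL x z -> leL y z -> leL j z].

Definition lattice_L : Prop :=
  forall x y, (exists m, is_meetL x y m) /\ (exists j, is_joinL x y j).

Definition garside (Delta : G) : Prop :=
  pos_submonoid /\ balanced Delta /\ noetherian /\ finite_set (Div Delta) /\
  (forall x, M x <-> gen_monoid (Div Delta) x) /\
  (forall x, gen_group (Div Delta) x) /\ lattice_L.

Definition parabolic (Delta : G) (H N : G -> Prop) (delta : G) : Prop :=
  [/\ balanced delta,
      (forall x, H x <-> gen_group (Div delta) x),
      (forall x, N x <-> gen_monoid (Div delta) x),
      (forall x, Div delta x <-> (Div Delta x /\ N x)) &
      (exists x, H x /\ x <> 1)].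

Definition unmovable (Delta a : G) : Prop := ~ leL Delta a.

Definition right_form (Delta alpha a : G) (p : Z) : Prop :=
  [/\ M a, unmovable Delta a & alpha = a * zpowg Delta p].

Definition right_form_N (N : G -> Prop) (delta beta b : G) (q : Z) : Prop :=
  [/\ N b, ~ leL delta b & beta = b * zpowg delta q].

Definition N_reduced (delta a : G) : Prop := M a /\ is_meetL a delta 1.

Definition omega (Delta delta : G) : G := delta^-1 * Delta.

Definition HN_reduced (Delta delta alpha : G) : Prop :=
  exists a p, right_form Delta alpha a p /\ N_reduced delta a /\
    (p = Z0 \/ ((p < 0)%Z /\ ~ leL (omega Delta delta) a)).

Definition Phi_pow (Delta : G) (n : Z) (alpha : G) : G :=
  zpowg Delta n * alpha * zpowg Delta (- n).

Definition omega_i (Delta delta : G) (i : nat) : G :=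
  Phi_pow Delta (1 - Z.of_nat i)%Z (omega Delta delta).

Definition omega_prod (Delta delta : G) (k : nat) : G :=
  prodl [seq omega_i Delta delta i | i <- iota 1 k].

End Garside.

(* Main.v *)
Require Import Defs.
From mathcomp Require Import all_boot.
From Stdlib Require Import ZArith Lia.

Local Open Scope group_scope.
Set Implicit Arguments.
Unset Strict Implicit.
Section Basics.
Variable G : groupType.
Variable M : G -> Prop.
Hypothesis hM : pos_submonoid M.

Lemma M1 : M 1. Proof. by case: hM. Qed.
Lemma Mmul x y : M x -> M y -> M (x * y). Proof. by case: hM => _ H _; apply: H. Qed.
Lemma Manti x : M x -> M x^-1 -> x = 1. Proof. by case: hM => _ _ H; apply: H. Qed.

Lemma leL_refl x : leL M x x. Proof. by rewrite /leL mulVg; exact: M1. Qed.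
Lemma leL_trans x y z : leL M x y -> leL M y z -> leL M x z.
Proof. rewrite /leL => h1 h2. have := Mmul h1 h2. by rewrite mulgA mulgK. Qed.
Lemma leL_mull g x y : leL M x y -> leL M (g * x) (g * y).
Proof. by rewrite /leL invgM -mulgA (mulgA g^-1) mulVg mul1g. Qed.
Lemma leL_mullV g x y : leL M (g * x) (g * y) -> leL M x y.
Proof. by move/(leL_mull g^-1); rewrite !mulKg. Qed.
Lemma leL1 x : leL M 1 x <-> M x. Proof. by rewrite /leL invg1 mul1g. Qed.
Lemma leLx1 x : leL M x 1 <-> M x^-1. Proof. by rewrite /leL mulg1. Qed.

Lemma prodl_cat (s1 s2 : seq G) : prodl (s1 ++ s2) = prodl s1 * prodl s2.
Proof. elim: s1 => [|x s IH] /=; first by rewrite mul1g. by rewrite IH mulgA. Qed.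
Lemma prodl_rcons (s : seq G) x : prodl (rcons s x) = prodl s * x.
Proof. by rewrite -cats1 prodl_cat /= mulg1. Qed.

Lemma gen_mul (D : G -> Prop) x y : gen_monoid D x -> gen_monoid D y -> gen_monoid D (x * y).
Proof.
move=> [s1 [h1 ->]] [s2 [h2 ->]]; exists (s1 ++ s2); split; last by rewrite prodl_cat.
by move=> z; rewrite mem_cat => /orP [] ?; [apply: h1|apply: h2].
Qed.
Lemma gen_one (D : G -> Prop) x : D x -> gen_monoid D x.
Proof. move=> h; exists [:: x]; split; last by rewrite /= mulg1.
by move=> z; rewrite inE => /eqP ->. Qed.
Lemma gen_1 (D : G -> Prop) : gen_monoid D 1.
Proof. by exists [::]. Qed.
Lemma gen_sub (D E : G -> Prop) x : (forall y, D y -> E y) -> gen_monoid D x -> gen_monoid E x.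
Proof. move=> hDE [s [h ->]]; exists s; split => // y /h; exact: hDE. Qed.

Definition cj (z x : G) := z * x * z^-1.
Lemma cjM z x y : cj z (x * y) = cj z x * cj z y.
Proof. by rewrite /cj !mulgA mulgVK. Qed.
Lemma gen_cj (D : G -> Prop) z x : (forall y, D y -> D (cj z y)) -> gen_monoid D x -> gen_monoid D (cj z x).
Proof.
move=> hD [s [h ->]]; elim: s h => [|y s IH] h /=.
  by rewrite /cj mulg1 mulgV; exact: gen_1.
rewrite cjM; apply: gen_mul; first by apply: gen_one; apply: hD; apply: h; rewrite inE eqxx.
by apply: IH => w hw; apply: h; rewrite inE hw orbT.
Qed.

Lemma cjK z y : cj z^-1 (cj z y) = y.
Proof. by rewrite /cj invgK !mulgA mulVg mul1g mulgVK. Qed.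
Lemma cjKV z y : cj z (cj z^-1 y) = y.
Proof. by rewrite /cj invgK !mulgA mulgV mul1g mulgK. Qed.
Lemma cjV z y : (cj z y)^-1 = cj z y^-1.
Proof. by rewrite /cj !invgM invgK mulgA. Qed.
Lemma cjL z x y : cj z (x^-1 * y) = (cj z x)^-1 * cj z y.
Proof. by rewrite cjM cjV. Qed.
Lemma bal_cj d y : balanced M d -> Div M d y -> Div M d (cj d y) /\ Div M d (cj d^-1 y).
Proof.
move=> [Md hb] [My hy]; rewrite /cj invgK.
have hR : DivR M d y by apply/hb.
case: hR => _ hyR.
split.
- have hu : DivL M d (d * y^-1).
    by split => //; rewrite /leL invgM invgK mulgVK.
  have [Mu hu'] : DivR M d (d * y^-1) by apply/hb.
  move: hu'; rewrite /leR invgM invgK mulgA => hu'.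
  split => //; rewrite /leL !invgM invgK -!mulgA mulVg mulg1.
  by case: hu.
- have ht : DivR M d (y^-1 * d).
    by split => //; rewrite /leR invgM invgK mulgA mulgV mul1g.
  have [Mt ht'] : DivL M d (y^-1 * d) by apply/hb.
  move: ht'; rewrite /leL invgM invgK => ht'.
  have hr : DivR M d (d^-1 * y * d).
    split => //; by rewrite /leR !invgM invgK mulVKg.
  by apply/hb.
Qed.
End Basics.
Section Gar.
Variable G : groupType.
Variables (M H N : G -> Prop) (Delta delta : G).
Hypothesis hg : garside M Delta.
Hypothesis hp : parabolic M Delta H N delta.

Lemma hM : pos_submonoid M. Proof. by case: hg. Qed.
Lemma MgenE x : M x <-> gen_monoid (Div M Delta) x.
Proof. by case: hg => _ [_ [_ [_ [h _]]]]. Qed.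
Lemma balD : balanced M Delta. Proof. by case: hg => _ []. Qed.
Lemma latt : lattice_L M. Proof. by case: hg => _ [_ [_ [_ [_ [_ h]]]]]. Qed.

Lemma PhiM x : M x -> M (cj Delta x).
Proof. move/MgenE => h; apply/MgenE; apply: gen_cj h => y hy.
by case: (bal_cj balD hy). Qed.
Lemma PhiVM x : M x -> M (cj Delta^-1 x).
Proof. move/MgenE => h; apply/MgenE; apply: gen_cj h => y hy.
by case: (bal_cj balD hy). Qed.

Lemma bald : balanced M delta. Proof. by case: hp. Qed.
Lemma NgenE x : N x <-> gen_monoid (Div M delta) x. Proof. by case: hp. Qed.
Lemma DivdE x : Div M delta x <-> (Div M Delta x /\ N x). Proof. by case: hp. Qed.
Lemma Ndiv y : Div M delta y -> N y.
Proof. by move=> h; apply/NgenE; apply: gen_one. Qed.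
Lemma NM x : N x -> M x.
Proof. move/NgenE => h; apply/MgenE; apply: gen_sub h => y /DivdE []. done. Qed.
Lemma Nmul x y : N x -> N y -> N (x * y).
Proof. move=> /NgenE h1 /NgenE h2; apply/NgenE; exact: gen_mul. Qed.
Lemma psiN x : N x -> N (cj delta^-1 x).
Proof. move/NgenE => h; apply/NgenE; apply: gen_cj h => y hy.
by case: (bal_cj bald hy). Qed.

Lemma Mdelta : M delta. Proof. by case: bald. Qed.
Lemma Divdd : Div M delta delta. Proof. split; [exact: Mdelta| exact: (leL_refl hM)]. Qed.
Lemma Nd : N delta. Proof. exact: Ndiv Divdd. Qed.
Lemma le_dD : leL M delta Delta. Proof. by case: (proj1 (DivdE _) Divdd) => [[]]. Qed.
Lemma Momega : M (omega Delta delta). Proof. exact: le_dD. Qed.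
Lemma le_oD : leL M (omega Delta delta) Delta.
Proof. have := PhiVM Mdelta. by rewrite /leL /omega /cj invgK invgM invgK. Qed.

Lemma meet_do z : leL M z delta -> leL M z (omega Delta delta) -> leL M z 1.
Proof.
move=> h1 h2.
have [[m [hm1 hm2 hm3]] _] := latt delta (omega Delta delta).
have hzm := hm3 z h1 h2.
apply: (leL_trans hM hzm).
have Mm : M m.
  have : leL M 1 m.
    apply: hm3; rewrite /leL invg1 !mul1g; [exact: Mdelta | exact: Momega].
  by rewrite /leL invg1 mul1g.
have Nm : N m by apply: Ndiv; split.
have h3 : Div M Delta (delta * m).
  split; first by apply: (Mmul hM) => //; exact: Mdelta.
  have := leL_mull delta hm2; by rewrite /omega mulVKg.
have h4 : Div M delta (delta * m) by apply/DivdE; split => //; apply: Nmul => //; exact: Nd.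
case: h4 => _; rewrite /leL invgM mulgVK => h.
by apply/leLx1.
Qed.

Lemma rdc (s : seq G) : (forall y, y \in s -> Div M delta y) ->
  forall a d, M a -> Div M delta d -> a * d = prodl s -> N a.
Proof.
elim/last_ind: s => [|s x IH] hs a d Ma Dd.
  move=> /= had; have hv := mulg1_eq had.
  have -> : a = 1 by apply: (Manti hM) => //; rewrite hv; case: Dd.
  by apply/NgenE; exact: gen_1.
rewrite prodl_rcons => had.
have hsx : forall y, y \in s -> Div M delta y.
  by move=> y hy; apply: hs; rewrite mem_rcons inE hy orbT.
have Dx : Div M delta x by apply: hs; rewrite mem_rcons inE eqxx.
have Ms : M (prodl s) by apply: NM; apply/NgenE; exists s.
have [[m [hm1 hm2 hm3]] _] := latt (d^-1) (x^-1).
have [Md _] := Dd.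
have [Mx _] := Dx.
have hdR : DivR M delta d by apply/(proj2 bald).
have hxR : DivR M delta x by apply/(proj2 bald).
have hbm : leL M (a * d)^-1 m.
  apply: hm3; rewrite /leL invgK; first by rewrite mulgK.
  by rewrite had mulgK.
have Me : M (a * d * m) by move: hbm; rewrite /leL invgK.
have hdm : leL M delta^-1 m.
  by apply: hm3; rewrite /leL invgK; [case: hdR | case: hxR].
have MJ : M m^-1.
  by have := Mmul hM hm1 Md; rewrite mulgVK.
have hJ : DivR M delta m^-1 by split => //; move: hdm; rewrite /leL /leR !invgK.
have [_ hJL] : DivL M delta m^-1 by apply/(proj2 bald).
move: hJL; rewrite /leL invgK => hJL.
have Dxx : Div M delta (m^-1 * x^-1).
  split => //; rewrite /leL invgM !invgK -mulgA; apply: (Mmul hM) => //.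
have Dyy : Div M delta (m^-1 * d^-1).
  split => //; rewrite /leL invgM !invgK -mulgA; apply: (Mmul hM) => //.
have Ne : N (a * d * m).
  apply: (IH hsx _ (m^-1 * x^-1) Me Dxx).
  by rewrite mulgA mulgK had mulgK.
have -> : a = a * d * m * (m^-1 * d^-1) by rewrite mulgA mulgK mulgK.
apply: Nmul => //; exact: Ndiv.
Qed.

Variable c : G.
Definition V n := delta ^- n * c * Delta ^+ n.
Lemma Vstep n : V n.+1 = omega Delta delta * cj Delta^-1 (V n).
Proof. by rewrite /V /omega /cj invgK !expgSr invgM !mulgA mulgK. Qed.

Lemma leL_Phi x y : leL M x y -> leL M (cj Delta x) (cj Delta y).
Proof. by rewrite /leL -cjL; exact: PhiM. Qed.

Lemma Vprop (Mc : M c) (hc : forall z, leL M z c -> leL M z delta -> leL M z 1) n :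
  M (V n) /\ forall z, leL M z (V n) -> leL M z delta -> leL M z 1.
Proof.
elim: n => [|n [MV IH]].
  by rewrite /V expg0 invg1 mul1g mulg1.
rewrite Vstep; set Y := cj Delta^-1 (V n); set w := omega Delta delta.
have MY : M Y by apply: PhiVM.
split; first by apply: (Mmul hM) => //; exact: Momega.
move=> z h1 h2.
have [_ [j [hj1 hj2 hj3]]] := latt w z.
have hj4 : leL M j (w * Y).
  by apply: hj3 => //; rewrite /leL mulKg.
have hj5 : leL M j Delta.
  by apply: hj3; [exact: le_oD | exact: (leL_trans hM h2 le_dD)].
have ht1 : leL M (w^-1 * j) Y by have := leL_mull w^-1 hj4; rewrite mulKg.
have ht2 : leL M (w^-1 * j) (cj Delta^-1 delta).
  have := leL_mull w^-1 hj5.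
  by rewrite /w /omega /cj invgM invgK invgK.
have ha := leL_Phi ht1; rewrite /Y cjKV in ha.
have hb := leL_Phi ht2; rewrite cjKV in hb.
have := IH _ ha hb.
move/leLx1; rewrite cjV => /PhiVM; rewrite cjK => ht.
have hjw : leL M j w.
  have := leL_mull w (proj2 (leLx1 _ _) ht); by rewrite mulVKg mulg1.
exact: (meet_do h2 (leL_trans hM hj2 hjw)).
Qed.
End Gar.
Unset Implicit Arguments.

Lemma zpow_oppn (G : groupType) (x : G) n : zpowg x (- Z.of_nat n) = x ^- n.
Proof. case: n => [|n] /=; first by rewrite expg0 invg1. by rewrite SuccNat2Pos.id_succ. Qed.
Lemma zpow_n (G : groupType) (x : G) n : zpowg x (Z.of_nat n) = x ^+ n.
Proof. case: n => [|n] /=; first by []. by rewrite SuccNat2Pos.id_succ. Qed.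

Lemma omega_prod_eq (G : groupType) (Delta delta : G) k m :
  prodl [seq omega_i Delta delta i | i <- iota m.+1 k] = Delta ^- m * (delta ^- k * Delta ^+ (k + m)).
Proof.
elim: k m => [|k IH] m /=.
  by rewrite expg0 invg1 mul1g add0n mulVg.
rewrite IH /omega_i /Phi_pow.
have -> : (1 - Z.of_nat m.+1)%Z = (- Z.of_nat m)%Z by lia.
rewrite Z.opp_involutive zpow_oppn zpow_n /omega.
rewrite expgS (expgSr delta) !invgM -addSnnS !mulgA mulgK mulgK.
done.
Qed.

Section Main.
Variable G : groupType.
Variables (M H N : G -> Prop) (Delta delta : G).
Hypothesis hg : garside M Delta.
Hypothesis hp : parabolic M Delta H N delta.

Lemma MDn n : M (Delta ^+ n).
Proof. elim: n => [|n IH]; first exact: (M1 (hM hg)).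
rewrite expgS; apply: (Mmul (hM hg)) => //; exact: (proj1 (balD hg)). Qed.

Lemma movable x n : M x -> leL M Delta (x * Delta ^+ n.+1).
Proof.
move=> Mx; rewrite /leL expgS !mulgA.
have := Mmul (hM hg) (PhiVM hg Mx) (MDn n).
by rewrite /cj invgK.
Qed.

Lemma uniq1 a c (i j : nat) : M a -> M c -> unmovable M Delta a -> unmovable M Delta c ->
  leq i j -> a * Delta ^+ i = c * Delta ^+ j -> a = c.
Proof.
move=> Ma Mc ua uc hij.
rewrite -(subnK hij) expgnDr mulgA => /mulIg e; subst a.
case: (subn j i) ua => [|r] ua; first by rewrite mulg1.
by exfalso; apply: ua; apply: movable.
Qed.

Lemma uniq2 a c (i j : nat) : M a -> M c -> unmovable M Delta a -> unmovable M Delta c ->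
  a * Delta ^+ i = c * Delta ^+ j -> a = c.
Proof.
move=> Ma Mc ua uc; case: (leqP i j) => h; first exact: uniq1.
by move=> e; symmetry; apply: (uniq1 c a j i Mc Ma uc ua (ltnW h) (esym e)).
Qed.
End Main.

Theorem lemma3p10 (G : groupType) (M : G -> Prop) (Delta : G)
  (H N : G -> Prop) (delta : G) (theta beta b c : G) (p k : nat) :
  garside M Delta ->
  parabolic M Delta H N delta ->
  HN_reduced M Delta delta theta ->
  ~ M theta ->
  leq 1 p ->
  right_form M Delta theta c (- Z.of_nat p)%Z ->
  H beta ->
  ~ N beta ->
  leq 1 k ->
  right_form_N M N delta beta b (- Z.of_nat k)%Z ->
  right_form M Delta (beta * theta)
    (b * omega_prod Delta delta k * Phi_pow Delta (- Z.of_nat k)%Z c)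
    (- Z.of_nat (k + p))%Z.
Proof.
move=> hg hp hT nMt hp1 [Mc uc eqt] hH nNb hk [Nb ndb eqb].
have hMM := hM hg.
rewrite zpow_oppn in eqt; rewrite zpow_oppn in eqb.
have [a [p' [[Ma ua eqa] [[_ [_ _ hm]] _]]]] := hT.
have eac : a = c.
  case: p' eqa => [|q|q] /=; rewrite eqt => e.
  - apply: (@uniq2 _ _ _ hg _ _ p 0 Ma Mc ua uc).
    by rewrite mulg1 in e; rewrite expg0 mulg1 -e mulgVK.
  - apply: (@uniq2 _ _ _ hg _ _ (Pos.to_nat q + p) 0 Ma Mc ua uc).
    by rewrite expg0 mulg1 expgnDr mulgA -e mulgVK.
  - apply: (@uniq2 _ _ _ hg _ _ p (Pos.to_nat q) Ma Mc ua uc).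
    have e2 := congr1 (fun x => x * Delta ^+ (Pos.to_nat q + p)) e.
    move: e2 => /=; rewrite {1}addnC expgnDr mulgA mulgVK expgnDr mulgA mulgVK => ->.
    done.
subst a.
have hV := Vprop hg hp Mc hm.
have eqX : b * omega_prod Delta delta k * Phi_pow Delta (- Z.of_nat k)%Z c = b * V Delta delta c k.
  rewrite /omega_prod.
  rewrite omega_prod_eq /Phi_pow Z.opp_involutive zpow_oppn zpow_n addn0 expg0 invg1 mul1g /V.
  by rewrite !mulgA mulgK.
rewrite eqX.
split.
- apply: (Mmul hMM); [exact: (NM hg hp) | exact: (proj1 (hV k))].
- move=> hD.
  have := PhiM hg hD; rewrite /cj mulVKg.
  case: k hk {eqX eqb} hV hD => [//|k] _ hV _.
  have -> : V Delta delta c k.+1 = delta^-1 * V Delta delta c k * Delta.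
    by rewrite /V !expgSr invgM !mulgA.
  rewrite !mulgA mulgK => hM1.
  have h1 : leL M (b * delta^-1)^-1 (V Delta delta c k) by rewrite /leL invgK /V !mulgA.
  have h2 : leL M (b * delta^-1)^-1 delta by rewrite /leL invgK mulgVK; exact: (NM hg hp).
  have := (proj2 (hV k)) _ h1 h2; move/leLx1; rewrite invgK => hbd.
  have [s [hs es]] := proj1 (NgenE hp _) Nb.
  have Nbd : N (b * delta^-1).
    by apply: (rdc hg hp hs hbd (Divdd hg hp)); rewrite mulgVK.
  have := NM hg hp (psiN hp Nbd); rewrite /cj invgK !mulgA mulgVK.
  by move=> hh; apply: ndb.
- rewrite eqt eqb zpow_oppn addnC expgnDr invgM /V !mulgA mulgK.
  done.
Qed.
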